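(* Let $f=f(u)$ be smooth and suppose $\Sigma=\{u\in\mathbb{R}: f(u)=u\}$ is nonempty and finite, with smallest element $u_1^*$ and largest element $u_N^*$, and assume $f'(u_1^* )<1$ and $f'(u_N^* )<1$. Let $(\rho,u)$ be a classical solution of $(S_f)$ on $[0,T)$ with $\rho\ge0$. Then for all $t\in[0,T)$ and $x\in\mathbb{R}$, $$\min\{\inf u_0,u_1^*\}\le u(t,x)\le\max\{\sup u_0,u_N^*\}.$$ In particular, if $\Sigma=\{u^*\}$ with $f'(u^* )<1$, then $\min\{\inf u_0,u^*\}\le u(t,x)\le\max\{\sup u_0,u^*\}$.
   Context: When $f$ depends on $u$ only, system $(S_f)$ is: $\rho_t+(\rho f(u))_x=0$, $u_t+uu_x=\rho\,(f(u)-u)$ for $x\in\mathbb{R}$, $t>0$, with $\rho(0,x)=\rho_0(x)\ge0$, $u(0,x)=u_0(x)$, where $u_0$ is bounded. A classical solution on $[0,T)$ is a pair $\rho,u\in C^1([0,T)\times\mathbb{R})$ satisfying the equations pointwise and the initial data, such that $\rho,u,\rho_x,u_x$ are bounded on $[0,t]\times\mathbb{R}$ for every $t<T$. *)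

(* Defs.v *)
From Stdlib Require Import Reals Lra List.
From Coquelicot Require Import Coquelicot.
Open Scope R_scope.

Definition smooth (f : R -> R) : Prop :=
  forall (n : nat) (x : R), ex_derive (Derive_n f n) x.

Definition cont_on_strip (T : R) (g : R -> R -> R) : Prop :=
  forall t x, 0 <= t < T ->
  forall eps, 0 < eps -> exists delta, 0 < delta /\
    forall s y, 0 <= s < T -> Rabs (s - t) < delta -> Rabs (y - x) < delta ->
      Rabs (g s y - g t x) < eps.

Definition bounded_on_slab (t : R) (g : R -> R -> R) : Prop :=
  exists M, forall s x, 0 <= s <= t -> Rabs (g s x) <= M.

(* Classical solution of (S_f) on [0,T) with initial data (rho0,u0):
   rho, u are C^1 on [0,T) x R, i.e. they are continuous there and have
   partial derivatives rt = rho_t, rx = rho_x, ut = u_t, ux = u_x which are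
   continuous on [0,T) x R (the t-derivatives at t = 0 being understood as
   the continuous extension of the interior ones); the equations hold
   pointwise for t in (0,T); the initial data hold; and rho, u, rho_x, u_x
   are bounded on [0,t] x R for every t < T. *)
Definition classical_solution (f : R -> R) (T : R)
  (rho0 u0 : R -> R) (rho u : R -> R -> R) : Prop :=
  exists rt rx ut ux : R -> R -> R,
    cont_on_strip T rho /\ cont_on_strip T u /\
    cont_on_strip T rt /\ cont_on_strip T rx /\
    cont_on_strip T ut /\ cont_on_strip T ux /\
    (forall t x, 0 < t < T -> is_derive (fun s => rho s x) t (rt t x)) /\
    (forall t x, 0 < t < T -> is_derive (fun s => u s x) t (ut t x)) /\
    (forall t x, 0 <= t < T -> is_derive (fun y => rho t y) x (rx t x)) /\
    (forall t x, 0 <= t < T -> is_derive (fun y => u t y) x (ux t x)) /\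
    (* rho_t + (rho f(u))_x = 0 *)
    (forall t x, 0 < t < T ->
       is_derive (fun y => rho t y * f (u t y)) x (- rt t x)) /\
    (forall t x, 0 < t < T ->
       ut t x + u t x * ux t x = rho t x * (f (u t x) - u t x)) /\
    (forall x, rho 0 x = rho0 x) /\
    (forall x, u 0 x = u0 x) /\
    (forall t, 0 <= t < T ->
       bounded_on_slab t rho /\ bounded_on_slab t u /\
       bounded_on_slab t rx /\ bounded_on_slab t ux).

Definition inf_fun (g : R -> R) : R := real (Glb_Rbar (fun y => exists x, y = g x)).
Definition sup_fun (g : R -> R) : R := real (Lub_Rbar (fun y => exists x, y = g x)).

(* Main.v *)
Require Import Defs.
From Stdlib Require Import Reals List.
From Coquelicot Require Import Coquelicot.
From Stdlib Require Import Lra Classical.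
Open Scope R_scope.

Lemma dmax_left g t l eta : derivable_pt_lim g t l -> 0 < eta ->
  (forall s, t - eta < s < t -> g s <= g t) -> 0 <= l.
Proof.
  intros Hd He Hm. destruct (Rle_or_lt 0 l) as [|Hl]; [auto|].
  destruct (Hd (-l)) as [del Hdel]; [lra|].
  set (h := - Rmin del eta / 2).
  assert (Hpos: 0 < Rmin del eta) by (apply Rmin_pos; [apply cond_pos|lra]).
  assert (Hh1: h <> 0) by (unfold h; lra).
  assert (Hh2: Rabs h < del).
  { unfold h; rewrite Rabs_left by lra. pose proof (Rmin_l del eta). lra. }
  specialize (Hdel h Hh1 Hh2).
  assert (Hg: g (t + h) <= g t) by (apply Hm; unfold h; pose proof (Rmin_r del eta); lra).
  assert (Hq: 0 <= (g (t+h) - g t) / h).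
  { unfold Rdiv. replace ((g (t + h) - g t) * / h) with ((g t - g (t+h)) * / (-h)) by (field; auto).
    apply Rmult_le_pos; [lra|]. apply Rlt_le, Rinv_0_lt_compat; unfold h; lra. }
  apply Rabs_def2 in Hdel. lra.
Qed.

Lemma dmax_right g t l eta : derivable_pt_lim g t l -> 0 < eta ->
  (forall s, t < s < t + eta -> g s <= g t) -> l <= 0.
Proof.
  intros Hd He Hm. destruct (Rle_or_lt l 0) as [|Hl]; [auto|].
  destruct (Hd l) as [del Hdel]; [lra|].
  set (h := Rmin del eta / 2).
  assert (Hpos: 0 < Rmin del eta) by (apply Rmin_pos; [apply cond_pos|lra]).
  assert (Hh1: h <> 0) by (unfold h; lra).
  assert (Hh2: Rabs h < del).
  { unfold h; rewrite Rabs_right by lra. pose proof (Rmin_l del eta). lra. }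
  specialize (Hdel h Hh1 Hh2).
  assert (Hg: g (t + h) <= g t) by (apply Hm; unfold h; pose proof (Rmin_r del eta); lra).
  assert (Hq: (g (t+h) - g t) / h <= 0).
  { unfold Rdiv. apply Rmult_le_0_r; [lra|]. apply Rlt_le, Rinv_0_lt_compat; unfold h; lra. }
  apply Rabs_def2 in Hdel. lra.
Qed.

Lemma dlin a b t : derivable_pt_lim (fun s => a * s + b) t a.
Proof. apply is_derive_Reals. auto_derive; auto; ring. Qed.

Lemma dquad b x : derivable_pt_lim (fun y => b * (y*y)) x (2*b*x).
Proof. apply is_derive_Reals. auto_derive; auto; ring. Qed.

Lemma dquad2 a b x : derivable_pt_lim (fun y => a + b * (y*y)) x (2*b*x).
Proof. apply is_derive_Reals. auto_derive; auto; ring. Qed.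

Lemma maxp (t0 K Lt B Bc : R) (u ut ux c : R -> R -> R) :
 0 <= t0 ->
 (forall t x, 0 < t <= t0 -> is_derive (fun s => u s x) t (ut t x)) ->
 (forall t x, 0 <= t <= t0 -> is_derive (fun y => u t y) x (ux t x)) ->
 (forall s t x, 0 <= s <= t0 -> 0 <= t <= t0 -> Rabs (u s x - u t x) <= Lt * Rabs (s - t)) ->
 (forall t x, 0 <= t <= t0 -> Rabs (u t x) <= B) ->
 (forall t x, 0 <= t <= t0 -> Rabs (c t x) <= Bc) ->
 (forall x, u 0 x <= K) ->
 (forall t x, 0 < t <= t0 -> K < u t x -> ut t x + c t x * ux t x <= 0) ->
 forall x, u t0 x <= K.
Proof.
  intros Ht0 Hut Hux Hlip HB HBc H0 Heq x0.
  destruct (Rle_or_lt (u t0 x0) K) as [|Hx0]; [auto|exfalso].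
  set (d := u t0 x0 - K).
  assert (Hd: 0 < d) by (unfold d; lra).
  assert (HB0: 0 <= B) by (specialize (HB 0 0 (conj (Rle_refl 0) Ht0)); pose proof (Rabs_pos (u 0 0)); lra).
  assert (HBc0: 0 <= Bc) by (specialize (HBc 0 0 (conj (Rle_refl 0) Ht0)); pose proof (Rabs_pos (c 0 0)); lra).
  set (eps := d / (4*(t0+1))).
  assert (Heps: 0 < eps) by (unfold eps; apply Rdiv_lt_0_compat; lra).
  assert (Heps2: eps * t0 <= d/4).
  { unfold eps. apply Rmult_le_reg_r with (4*(t0+1)); [lra|].
    field_simplify; [|lra]. nra. }
  set (A := B + Rabs K + d).
  assert (HA: 0 < A) by (unfold A; pose proof (Rabs_pos K); lra).
  set (delta := Rmin (d/(4*(x0*x0+1))) (eps*eps/(4*(Bc*Bc+1)*(A+1)))).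
  assert (Hdel: 0 < delta).
  { unfold delta; apply Rmin_pos; apply Rdiv_lt_0_compat; nra. }
  assert (Hdel1: delta * x0*x0 <= d/4).
  { assert (delta <= d/(4*(x0*x0+1))) by apply Rmin_l.
    assert (delta * (4*(x0*x0+1)) <= d).
    { apply Rmult_le_reg_r with (/ (4*(x0*x0+1))).
      apply Rinv_0_lt_compat; nra.
      rewrite Rmult_assoc, Rinv_r by nra. unfold Rdiv in H. lra. }
    nra. }
  assert (Hdel2: delta * (4*(Bc*Bc+1)*(A+1)) <= eps*eps).
  { assert (delta <= eps*eps/(4*(Bc*Bc+1)*(A+1))) by apply Rmin_r.
    assert (0 < 4*(Bc*Bc+1)*(A+1)) by nra.
    apply Rmult_le_reg_r with (/ (4*(Bc*Bc+1)*(A+1))).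
    apply Rinv_0_lt_compat; nra.
    rewrite Rmult_assoc, Rinv_r by nra. unfold Rdiv in H. lra. }
  set (v := fun t x => u t x - (eps*t + delta*(x*x))).
  set (K' := K + d/4).
  assert (Hv0: K' < v t0 x0) by (unfold v, K', d in *; lra).
  set (Lv := Rabs Lt + eps).
  assert (HLv: 0 < Lv) by (unfold Lv; pose proof (Rabs_pos Lt); lra).
  assert (Hvlip: forall s t x, 0 <= s <= t0 -> 0 <= t <= t0 -> Rabs (v s x - v t x) <= Lv * Rabs (s - t)).
  { intros s t x Hs Ht. unfold v, Lv.
    replace (u s x - (eps * s + delta * (x * x)) - (u t x - (eps * t + delta * (x * x))))
      with ((u s x - u t x) + (- eps * (s - t))) by ring.
    eapply Rle_trans; [apply Rabs_triang|].
    rewrite Rabs_mult, Rabs_Ropp, (Rabs_right eps) by lra.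
    specialize (Hlip s t x Hs Ht).
    assert (Lt * Rabs (s-t) <= Rabs Lt * Rabs (s-t)).
    { apply Rmult_le_compat_r; [apply Rabs_pos| apply RRle_abs]. }
    lra. }
  set (L := A/delta + 1).
  assert (HtailL: delta * L > A).
  { unfold L. rewrite Rmult_plus_distr_l. unfold Rdiv.
    rewrite <- Rmult_assoc, (Rmult_comm delta A), Rmult_assoc, Rinv_r by lra. lra. }
  assert (HL1: 1 <= L) by (unfold L; assert (0 <= A/delta) by (apply Rlt_le, Rdiv_lt_0_compat; lra); lra).
  assert (Htail: forall t x, 0 <= t <= t0 -> L < Rabs x -> v t x < K - d).
  { intros t x Ht Hx. unfold v.
    specialize (HB t x Ht). apply Rabs_le_between in HB.
    assert (x * x = Rabs x * Rabs x) by (rewrite <- Rabs_mult; rewrite Rabs_right; nra).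
    assert (L * L < x * x) by nra.
    assert (delta * L <= delta * (x*x)) by nra.
    pose proof (Rabs_pos K). pose proof (Rle_abs (-K)). rewrite Rabs_Ropp in *.
    unfold A in *. nra. }
  set (S := fun s => 0 <= s <= t0 /\ forall t x, 0 <= t <= s -> v t x <= K').
  assert (HS0: S 0).
  { split; [lra|]. intros t x Ht. assert (t = 0) by lra. subst t. unfold v, K'.
    specialize (H0 x). assert (0 <= delta*(x*x)) by nra. lra. }
  destruct (completeness S) as [t1 [Hub Hlub]].
  { exists t0. intros s [Hs _]. lra. }
  { exists 0; auto. }
  assert (Ht1a: 0 <= t1) by (apply Hub; auto).
  assert (Ht1b: t1 <= t0) by (apply Hlub; intros s [Hs _]; lra).
  assert (Hbelow: forall t x, 0 <= t < t1 -> v t x <= K').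
  { intros t x Ht. destruct (Rle_or_lt (v t x) K') as [|Hc]; [auto|exfalso].
    assert (t1 <= t).
    { apply Hlub. intros s [Hs Hs2]. destruct (Rle_or_lt s t) as [|Hst]; [auto|].
      specialize (Hs2 t x ltac:(lra)). lra. }
    lra. }
  assert (HSt1: S t1).
  { split; [lra|]. intros t x Ht.
    destruct (Rlt_or_le t t1) as [Htl|Hte]; [apply Hbelow; lra|].
    assert (t = t1) by lra. subst t.
    destruct (Req_dec t1 0) as [Hz|Hnz].
    { rewrite Hz in *. destruct HS0 as [_ HS0]. apply HS0. lra. }
    destruct (Rle_or_lt (v t1 x) K') as [|Hc]; [auto|exfalso].
    set (g := v t1 x - K').
    set (t2 := t1 - Rmin t1 (g/Lv) / 2).
    assert (0 < Rmin t1 (g/Lv)) by (apply Rmin_pos; [lra|apply Rdiv_lt_0_compat; unfold g; lra]).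
    assert (Rmin t1 (g/Lv) <= t1) by apply Rmin_l.
    assert (Lv * (Rmin t1 (g/Lv)) <= g).
    { assert (Rmin t1 (g/Lv) <= g/Lv) by apply Rmin_r.
      apply Rmult_le_compat_l with (r := Lv) in H2; [|lra].
      unfold Rdiv in H2. rewrite <- Rmult_assoc, (Rmult_comm Lv g), Rmult_assoc, Rinv_r in H2 by lra. lra. }
    assert (Ht2: 0 <= t2 <= t0). { unfold t2. lra. }
    assert (Ht1c: 0 <= t1 <= t0) by lra.
    specialize (Hvlip t2 t1 x Ht2 Ht1c).
    assert (Ht2n: t2 - t1 < 0) by (unfold t2; lra).
    rewrite (Rabs_left _ Ht2n) in Hvlip.
    apply Rabs_le_between in Hvlip.
    assert (Ht2b: 0 <= t2 < t1) by (unfold t2; lra).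
    specialize (Hbelow t2 x Ht2b).
    unfold t2, g in *. nra. }
  assert (Ht1t0: t1 < t0).
  { destruct (Rle_lt_or_eq_dec t1 t0 Ht1b) as [|He]; [auto|].
    destruct HSt1 as [_ HS]. rewrite He in HS. specialize (HS t0 x0 ltac:(lra)). lra. }
  assert (Hcont: forall y, continuity_pt (fun y => v t1 y) y).
  { intros y. apply derivable_continuous_pt.
    exists (ux t1 y - 2*delta*y).
    unfold v. apply derivable_pt_lim_minus.
    - apply is_derive_Reals. apply Hux. lra.
    - apply dquad2. }
  assert (Hex: exists x1, K' <= v t1 x1).
  { apply NNPP. intros Hn.
    assert (Hlt: forall x, v t1 x < K').
    { intros x. apply Rnot_le_lt. intros Hx. apply Hn. exists x; auto. }
    destruct (continuity_ab_maj (fun y => v t1 y) (-L) L ltac:(lra) (fun c _ => Hcont c)) as [Mx [HMx HMx2]].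
    set (gap := K' - v t1 Mx).
    assert (Hgap: 0 < gap) by (unfold gap; specialize (Hlt Mx); lra).
    set (eta := Rmin (t0 - t1) (gap / (2*Lv))).
    assert (Heta: 0 < eta) by (apply Rmin_pos; [lra| apply Rdiv_lt_0_compat; lra]).
    assert (Heta1: eta <= t0 - t1) by apply Rmin_l.
    assert (Heta2: Lv * eta <= gap/2).
    { assert (eta <= gap/(2*Lv)) by apply Rmin_r.
      apply Rmult_le_compat_l with (r := Lv) in H; [|lra].
      replace (Lv * (gap / (2*Lv))) with (gap/2) in H by (field; lra). lra. }
    assert (HS': S (t1 + eta)).
    { split; [lra|]. intros t x Ht.
      destruct (Rle_or_lt t t1) as [Htt|Htt].
      { destruct HSt1 as [_ HS]. apply HS. lra. }
      destruct (Rle_or_lt (Rabs x) L) as [Hx|Hx].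
      - assert (Hxx: -L <= x <= L) by (apply Rabs_le_between; auto).
        specialize (HMx x Hxx). simpl in HMx.
        assert (Hta: 0 <= t <= t0) by lra. assert (Htb: 0 <= t1 <= t0) by lra.
        specialize (Hvlip t t1 x Hta Htb).
        assert (Htp: 0 <= t - t1) by lra.
        rewrite (Rabs_right _ (Rle_ge _ _ Htp)) in Hvlip.
        apply Rabs_le_between in Hvlip.
        assert (Lv * (t - t1) <= Lv * eta) by (apply Rmult_le_compat_l; lra).
        unfold gap in *. lra.
      - assert (Hta: 0 <= t <= t0) by lra.
        specialize (Htail t x Hta Hx). unfold K'. lra. }
    specialize (Hub _ HS'). lra. }
  destruct Hex as [x1 Hx1].
  assert (Hx1e: v t1 x1 = K') by (destruct HSt1 as [_ HS]; specialize (HS t1 x1 ltac:(lra)); lra).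
  assert (Ht1p: 0 < t1).
  { destruct (Rle_lt_or_eq_dec 0 t1 Ht1a) as [|He]; [auto|].
    rewrite <- He in Hx1e. unfold v in Hx1e. specialize (H0 x1). unfold K' in Hx1e.
    assert (0 <= delta*(x1*x1)) by nra. lra. }
  assert (Hdt: eps <= ut t1 x1).
  { assert (Hd1: derivable_pt_lim (fun s => v s x1) t1 (ut t1 x1 - eps)).
    { unfold v. apply derivable_pt_lim_minus.
      - apply is_derive_Reals. apply Hut. lra.
      - apply dlin. }
    assert (0 <= ut t1 x1 - eps); [|lra].
    apply (dmax_left _ _ _ t1 Hd1 Ht1p).
    intros s Hs. rewrite Hx1e. apply Hbelow. lra. }
  assert (Hdx: ux t1 x1 = 2*delta*x1).
  { assert (Hd1: derivable_pt_lim (fun y => v t1 y) x1 (ux t1 x1 - 2*delta*x1)).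
    { unfold v. apply derivable_pt_lim_minus.
      - apply is_derive_Reals. apply Hux. lra.
      - apply dquad2. }
    assert (Hm: forall y, v t1 y <= v t1 x1).
    { intros y. rewrite Hx1e. destruct HSt1 as [_ HS]. apply HS. lra. }
    pose proof (dmax_left _ _ _ 1 Hd1 Rlt_0_1 (fun s _ => Hm s)).
    pose proof (dmax_right _ _ _ 1 Hd1 Rlt_0_1 (fun s _ => Hm s)). lra. }
  assert (Hu1: u t1 x1 = K' + (eps*t1 + delta*(x1*x1))) by (unfold v in Hx1e; lra).
  assert (HuK: K < u t1 x1) by (rewrite Hu1; unfold K'; assert (0 <= delta*(x1*x1)) by nra; nra).
  specialize (Heq t1 x1 ltac:(lra) HuK).
  assert (HdA: delta*(x1*x1) <= A).
  { specialize (HB t1 x1 ltac:(lra)). apply Rabs_le_between in HB.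
    pose proof (Rle_abs (-K)). rewrite Rabs_Ropp in *. unfold A, K' in *. nra. }
  specialize (HBc t1 x1 ltac:(lra)).
  rewrite Hdx in Heq.
  assert (Hc: eps <= Rabs (c t1 x1) * (2*delta*Rabs x1)).
  { pose proof (Rle_abs (- (c t1 x1 * (2*delta*x1)))).
    rewrite Rabs_Ropp, !Rabs_mult, (Rabs_right 2), (Rabs_right delta) in H by lra. lra. }
  assert (Hc2: eps <= Bc * (2*delta*Rabs x1)).
  { eapply Rle_trans; [apply Hc|]. apply Rmult_le_compat_r; [|auto].
    pose proof (Rabs_pos x1). nra. }
  assert (Hsq: eps*eps <= Bc*Bc*4*delta*(delta*(x1*x1))).
  { assert (Rabs x1 * Rabs x1 = x1*x1) by (rewrite <- Rabs_mult; apply Rabs_right; nra).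
    assert (0 <= Bc * (2*delta*Rabs x1)) by (pose proof (Rabs_pos x1); nra).
    assert (eps*eps <= (Bc * (2*delta*Rabs x1)) * (Bc * (2*delta*Rabs x1)))
      by (apply Rmult_le_compat; lra).
    replace (Bc*Bc*4*delta*(delta*(x1*x1))) with ((Bc * (2*delta*Rabs x1)) * (Bc * (2*delta*Rabs x1)))
      by (rewrite <- H; ring).
    auto. }
  assert (Bc*Bc*4*delta*(delta*(x1*x1)) <= Bc*Bc*4*delta*A).
  { apply Rmult_le_compat_l; [nra|auto]. }
  assert (Bc*Bc*4*delta*A < delta * (4*(Bc*Bc+1)*(A+1))) by nra.
  lra.
Qed.

Lemma sign_up f uN dN : continuity f -> derivable_pt_lim f uN dN -> dN < 1 -> f uN = uN ->
  (forall v, f v = v -> v <= uN) -> forall v, uN < v -> f v < v.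
Proof.
  intros Hc Hd HdN Hf Hmax v Hv.
  set (g := fun w => f w - w).
  assert (Hg: derivable_pt_lim g uN (dN - 1)).
  { apply derivable_pt_lim_minus; auto. apply derivable_pt_lim_id. }
  destruct (Hg (1 - dN)) as [del Hdel]; [lra|].
  set (h := Rmin (del/2) ((v - uN)/2)).
  assert (Hh: 0 < h) by (apply Rmin_pos; pose proof (cond_pos del); lra).
  assert (Hh1: h <= del/2) by apply Rmin_l.
  assert (Hh2: h <= (v-uN)/2) by apply Rmin_r.
  assert (Hh0: h <> 0) by lra.
  specialize (Hdel h Hh0).
  assert (Hha: Rabs h < del) by (rewrite Rabs_right; pose proof (cond_pos del); lra).
  specialize (Hdel Hha). apply Rabs_def2 in Hdel. destruct Hdel as [Hq _].
  assert (Hgw: g (uN + h) < 0).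
  { assert ((g (uN + h) - g uN) / h < 0) by lra.
    assert (g uN = 0) by (unfold g; lra).
    assert (g (uN+h) = ((g (uN + h) - g uN) / h) * h) by (rewrite H0; field; lra).
    rewrite H1. apply Rmult_neg_pos; lra. }
  destruct (Rlt_or_le (f v) v) as [|Hfv]; [auto|exfalso].
  destruct (Rle_lt_or_eq_dec _ _ Hfv) as [Hlt|Heq].
  - assert (Hcg: continuity g) by (apply continuity_minus; auto; apply derivable_continuous, derivable_id).
    assert (Ha: uN + h < v) by lra. assert (Hb: 0 < g v) by (unfold g; lra).
    destruct (IVT g (uN+h) v Hcg Ha Hgw Hb) as [z [Hz1 Hz2]].
    assert (f z = z) by (unfold g in Hz2; lra). specialize (Hmax z H). lra.
  - specialize (Hmax v (eq_sym Heq)). lra.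
Qed.

Lemma sign_down f u1 d1 : continuity f -> derivable_pt_lim f u1 d1 -> d1 < 1 -> f u1 = u1 ->
  (forall v, f v = v -> u1 <= v) -> forall v, v < u1 -> v < f v.
Proof.
  intros Hc Hd HdN Hf Hmin v Hv.
  set (g := fun w => f w - w).
  assert (Hg: derivable_pt_lim g u1 (d1 - 1)).
  { apply derivable_pt_lim_minus; auto. apply derivable_pt_lim_id. }
  destruct (Hg (1 - d1)) as [del Hdel]; [lra|].
  set (h := - Rmin (del/2) ((u1 - v)/2)).
  assert (Hh: 0 < Rmin (del/2) ((u1 - v)/2)) by (apply Rmin_pos; pose proof (cond_pos del); lra).
  assert (Hh1: Rmin (del/2) ((u1 - v)/2) <= del/2) by apply Rmin_l.
  assert (Hh2: Rmin (del/2) ((u1 - v)/2) <= (u1-v)/2) by apply Rmin_r.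
  assert (Hh0: h <> 0) by (unfold h; lra).
  specialize (Hdel h Hh0).
  assert (Hha: Rabs h < del) by (unfold h; rewrite Rabs_left; pose proof (cond_pos del); lra).
  specialize (Hdel Hha). apply Rabs_def2 in Hdel. destruct Hdel as [Hq _].
  assert (Hgw: 0 < g (u1 + h)).
  { assert ((g (u1 + h) - g u1) / h < 0) by lra.
    assert (g u1 = 0) by (unfold g; lra).
    assert (g (u1+h) = ((g (u1 + h) - g u1) / h) * h) by (rewrite H0; field; unfold h; lra).
    rewrite H1. apply Rmult_neg_neg; [lra|unfold h; lra]. }
  destruct (Rlt_or_le v (f v)) as [|Hfv]; [auto|exfalso].
  destruct (Rle_lt_or_eq_dec _ _ Hfv) as [Hlt|Heq].
  - assert (Hcg: continuity g) by (apply continuity_minus; auto; apply derivable_continuous, derivable_id).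
    assert (Ha: v < u1 + h) by (unfold h; lra). assert (Hb: g v < 0) by (unfold g; lra).
    destruct (IVT g v (u1+h) Hcg Ha Hb Hgw) as [z [Hz1 Hz2]].
    assert (f z = z) by (unfold g in Hz2; lra). specialize (Hmin z H). unfold h in *. lra.
  - specialize (Hmin v Heq). lra.
Qed.

Lemma sup_ge g M : (forall x, Rabs (g x) <= M) -> forall x, g x <= sup_fun g.
Proof.
  intros HM x. unfold sup_fun.
  destruct (Lub_Rbar_correct (fun y => exists x, y = g x)) as [Hub Hl].
  assert (H1 := Hub (g x) (ex_intro _ x eq_refl)).
  assert (H2 : Rbar_le (Lub_Rbar (fun y => exists x, y = g x)) M).
  { apply Hl. intros y [z ->]. simpl. specialize (HM z). apply Rabs_le_between in HM. lra. }
  destruct (Lub_Rbar _); simpl in *; tauto.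
Qed.

Lemma inf_le g M : (forall x, Rabs (g x) <= M) -> forall x, inf_fun g <= g x.
Proof.
  intros HM x. unfold inf_fun.
  destruct (Glb_Rbar_correct (fun y => exists x, y = g x)) as [Hub Hl].
  assert (H1 := Hub (g x) (ex_intro _ x eq_refl)).
  assert (H2 : Rbar_le (-M) (Glb_Rbar (fun y => exists x, y = g x))).
  { apply Hl. intros y [z ->]. simpl. specialize (HM z). apply Rabs_le_between in HM. lra. }
  destruct (Glb_Rbar _); simpl in *; tauto.
Qed.

Lemma lip_time (h dh : R -> R) t0 Lt :
  (forall r, 0 < r <= t0 -> is_derive h r (dh r)) ->
  (forall r, 0 < r <= t0 -> Rabs (dh r) <= Lt) ->
  (forall eps, 0 < eps -> exists del, 0 < del /\ forall r, 0 <= r <= t0 -> r < del -> Rabs (h r - h 0) < eps) ->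
  0 <= Lt ->
  forall s t, 0 <= s <= t0 -> 0 <= t <= t0 -> Rabs (h s - h t) <= Lt * Rabs (s - t).
Proof.
  intros Hd Hb Hc HLt.
  assert (Hpos: forall s t, 0 < s <= t0 -> 0 < t <= t0 -> Rabs (h s - h t) <= Lt * Rabs (s - t)).
  { intros s t Hs Ht.
    destruct (MVT_gen h t s dh) as [c [Hc1 Hc2]].
    - intros x Hx. apply Hd. pose proof (Rmin_glb_lt t s 0). pose proof (Rmax_lub t s t0).
      pose proof (Rmin_l t s). pose proof (Rmax_l t s). split.
      + assert (0 < Rmin t s) by (apply Rmin_glb_lt; lra). lra.
      + assert (Rmax t s <= t0) by (apply Rmax_lub; lra). lra.
    - intros x Hx. assert (0 < x <= t0).
      { split. assert (0 < Rmin t s) by (apply Rmin_glb_lt; lra). lra.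
        assert (Rmax t s <= t0) by (apply Rmax_lub; lra). lra. }
      apply derivable_continuous_pt. exists (dh x). apply is_derive_Reals. apply Hd; auto.
    - rewrite Hc2, Rabs_mult. apply Rmult_le_compat_r; [apply Rabs_pos|].
      apply Hb. split.
      + assert (0 < Rmin t s) by (apply Rmin_glb_lt; lra). lra.
      + assert (Rmax t s <= t0) by (apply Rmax_lub; lra). lra. }
  assert (Hzero: forall t, 0 < t <= t0 -> Rabs (h 0 - h t) <= Lt * Rabs (0 - t)).
  { intros t Ht. replace (0 - t) with (- t) by ring. rewrite Rabs_Ropp.
    assert (Htg: t >= 0) by lra. rewrite (Rabs_right t Htg).
    apply Rnot_lt_le. intros Hlt.
    set (e := Rabs (h 0 - h t) - Lt * t).
    assert (He: 0 < e) by (unfold e; lra).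
    destruct (Hc e He) as [del [Hdel Hr]].
    set (r := Rmin (del/2) t).
    assert (Hr0: 0 < r) by (apply Rmin_pos; lra).
    assert (Hr1: r <= del/2) by apply Rmin_l. assert (Hr2: r <= t) by apply Rmin_r.
    assert (Hrr: 0 <= r <= t0) by lra. assert (Hrd: r < del) by lra.
    specialize (Hr r Hrr Hrd).
    assert (Hrp: 0 < r <= t0) by lra.
    specialize (Hpos r t Hrp Ht).
    assert (Hrt: r - t <= 0) by lra. rewrite (Rabs_left1 _ Hrt) in Hpos.
    assert (h 0 - h t = -(h r - h 0) + (h r - h t)) by ring.
    pose proof (Rabs_triang (-(h r - h 0)) (h r - h t)). rewrite Rabs_Ropp in H0.
    rewrite <- H in H0.
    assert (Lt * - (r - t) <= Lt * t) by (apply Rmult_le_compat_l; lra).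
    unfold e in *. lra. }
  intros s t Hs Ht.
  destruct (Req_dec s 0) as [Hs0|Hs0]; destruct (Req_dec t 0) as [Ht0|Ht0].
  - subst. unfold Rminus. rewrite !Rplus_opp_r, Rabs_R0. lra.
  - subst s. apply Hzero. lra.
  - subst t. rewrite Rabs_minus_sym, (Rabs_minus_sym s). apply Hzero. lra.
  - apply Hpos; lra.
Qed.

Theorem mainTheorem5
  (f : R -> R) (Hsmooth : smooth f)
  (Hfinite : exists l : list R, forall v, f v = v <-> In v l)
  (u1 uN : R)
  (Hu1 : f u1 = u1) (HuN : f uN = uN)
  (Hmin : forall v, f v = v -> u1 <= v)
  (Hmax : forall v, f v = v -> v <= uN)
  (Hd1 : Derive f u1 < 1) (HdN : Derive f uN < 1)
  (T : R) (HT : 0 < T)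
  (rho0 u0 : R -> R)
  (Hrho0 : forall x, 0 <= rho0 x)
  (Hu0 : exists M, forall x, Rabs (u0 x) <= M)
  (rho u : R -> R -> R)
  (Hsol : classical_solution f T rho0 u0 rho u)
  (Hrho : forall t x, 0 <= t < T -> 0 <= rho t x) :
  forall t x, 0 <= t < T ->
    Rmin (inf_fun u0) u1 <= u t x <= Rmax (sup_fun u0) uN.
Proof.
  intros t0 x Ht.
  destruct Hsol as (rt & rx & ut & ux & Hcr & Hcu & Hcrt & Hcrx & Hcut & Hcux & Hdrt & Hdut & Hdrx & Hdux & Hcons & Heq & Hr0 & Hu0' & Hbd).
  destruct Hu0 as [M0 HM0].
  assert (Hfd: forall v, derivable_pt_lim f v (Derive f v)).
  { intros v. apply is_derive_Reals, Derive_correct. exact (Hsmooth 0%nat v). }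
  assert (Hfc: continuity f).
  { intros v. apply derivable_continuous_pt. exists (Derive f v). apply Hfd. }
  destruct (Hbd t0 Ht) as [[Br HBr] [[Bu HBu] [_ [Bux HBux]]]].
  assert (HBu0: 0 <= Bu) by (specialize (HBu 0 0 ltac:(lra)); pose proof (Rabs_pos (u 0 0)); lra).
  destruct (continuity_ab_maj (fun v => Rabs (f v)) (-Bu) Bu ltac:(lra)
     (fun c _ => continuity_pt_comp f Rabs c (Hfc c) (Rcontinuity_abs (f c)))) as [Mf [HMf _]].
  set (Bf := Rabs (f Mf)).
  set (Lt := Bu * Bux + Br * (Bf + Bu)).
  assert (Hutb: forall s y, 0 < s <= t0 -> Rabs (ut s y) <= Lt).
  { intros s y Hs.
    assert (Hs': 0 < s < T) by lra.
    assert (Hut: ut s y = rho s y * (f (u s y) - u s y) - u s y * ux s y) by (specialize (Heq s y Hs'); lra).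
    assert (Hs2: 0 <= s <= t0) by lra.
    pose proof (HBu s y Hs2) as Ha. pose proof (HBr s y Hs2) as Hb. pose proof (HBux s y Hs2) as Hc.
    assert (Hf: Rabs (f (u s y)) <= Bf) by (apply (HMf (u s y)); apply Rabs_le_between; auto).
    rewrite Hut. eapply Rle_trans; [apply Rabs_triang|]. rewrite Rabs_Ropp, !Rabs_mult.
    assert (Rabs (f (u s y) - u s y) <= Bf + Bu) by (eapply Rle_trans; [apply Rabs_triang|]; rewrite Rabs_Ropp; lra).
    unfold Lt. pose proof (Rabs_pos (rho s y)). pose proof (Rabs_pos (u s y)).
    pose proof (Rabs_pos (ux s y)). pose proof (Rabs_pos (f (u s y) - u s y)).
    assert (Rabs (rho s y) * Rabs (f (u s y) - u s y) <= Br * (Bf + Bu)) by (apply Rmult_le_compat; lra).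
    assert (Rabs (u s y) * Rabs (ux s y) <= Bu * Bux) by (apply Rmult_le_compat; lra).
    lra. }
  assert (HLt: 0 <= Lt).
  { assert (Hz: 0 <= 0 <= t0) by lra.
    pose proof (HBr 0 0 Hz). pose proof (HBux 0 0 Hz). pose proof (Rabs_pos (rho 0 0)).
    pose proof (Rabs_pos (ux 0 0)). pose proof (Rabs_pos (f Mf)). unfold Lt, Bf. 
    apply Rplus_le_le_0_compat; apply Rmult_le_pos; lra. }
  assert (Hlip: forall s t y, 0 <= s <= t0 -> 0 <= t <= t0 -> Rabs (u s y - u t y) <= Lt * Rabs (s - t)).
  { intros s t y. apply (lip_time (fun s => u s y) (fun s => ut s y)); auto.
    - intros r Hr. apply Hdut. lra.
    - intros eps Heps. destruct (Hcu 0 y ltac:(lra) eps Heps) as [del [Hdel Hd]].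
      exists del. split; auto. intros r Hr Hrd. apply Hd; try lra.
      rewrite Rminus_0_r, Rabs_right; lra.
      unfold Rminus; rewrite Rplus_opp_r, Rabs_R0; lra. }
  assert (Ht0: 0 <= t0) by lra.
  split.
  - set (K := - Rmin (inf_fun u0) u1).
    assert (Hm: - u t0 x <= K).
    { apply (maxp t0 K Lt Bu Bu (fun t x => - u t x) (fun t x => - ut t x) (fun t x => - ux t x) u Ht0).
      - intros t y Hty. apply (is_derive_opp (fun s => u s y)). apply Hdut. lra.
      - intros t y Hty. apply (is_derive_opp (fun z => u t z)). apply Hdux. lra.
      - intros s t y Hs Hty. replace (- u s y - - u t y) with (- (u s y - u t y)) by ring.
        rewrite Rabs_Ropp. auto.
      - intros t y Hty. rewrite Rabs_Ropp. auto.
      - auto.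
      - intros y. rewrite Hu0'. unfold K.
        pose proof (inf_le u0 M0 HM0 y). pose proof (Rmin_l (inf_fun u0) u1). lra.
      - intros t y Hty Hlt.
        assert (Hty': 0 < t < T) by lra.
        specialize (Heq t y Hty').
        assert (Hv: u t y < u1) by (unfold K in Hlt; pose proof (Rmin_r (inf_fun u0) u1); lra).
        pose proof (sign_down f u1 _ Hfc (Hfd u1) Hd1 Hu1 Hmin (u t y) Hv).
        assert (0 <= rho t y) by (apply Hrho; lra).
        assert (0 <= rho t y * (f (u t y) - u t y)) by (apply Rmult_le_pos; lra).
        lra. }
    unfold K in Hm. lra.
  - set (K := Rmax (sup_fun u0) uN).
    apply (maxp t0 K Lt Bu Bu u ut ux u Ht0).
    + intros t y Hty. apply Hdut. lra.
    + intros t y Hty. apply Hdux. lra.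
    + auto.
    + auto.
    + auto.
    + intros y. rewrite Hu0'. unfold K.
      pose proof (sup_ge u0 M0 HM0 y). pose proof (Rmax_l (sup_fun u0) uN). lra.
    + intros t y Hty Hlt.
      assert (Hty': 0 < t < T) by lra.
      specialize (Heq t y Hty').
      assert (Hv: uN < u t y) by (unfold K in Hlt; pose proof (Rmax_r (sup_fun u0) uN); lra).
      pose proof (sign_up f uN _ Hfc (Hfd uN) HdN HuN Hmax (u t y) Hv).
      assert (0 <= rho t y) by (apply Hrho; lra).
      assert (rho t y * (f (u t y) - u t y) <= 0) by (apply Rmult_le_0_l; lra).
      lra.
Qed.
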